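(* Let $P$ be the set of $n\geq 3$ points equally spaced on the unit circle. Every geometric spanner on $P$ with dilation less than $2$ contains every edge of the convex hull of $P$ (i.e. every edge between two points consecutive on the circle).
   Context: A geometric spanner on $P$ is a graph with vertex set $P$ whose edges are weighted by the Euclidean distance between their endpoints. Its dilation is $\max\{ d_G(p,p')/|pp'| : p\neq p'\in P\}$, where $d_G$ is the shortest-path distance and $|pp'|$ the Euclidean distance. *)

(* Defs.v *)
From HB Require Import structures.
From mathcomp Require Import all_boot all_order all_algebra.
From mathcomp Require Import all_classical all_reals all_analysis.
Set Implicit Arguments. Unset Strict Implicit. Unset Printing Implicit Defensive.
Import Order.TTheory GRing.Theory Num.Theory.
Local Open Scope classical_set_scope.
Local Open Scope ring_scope.

Definition edist (R : realType) (a b : R * R) : R :=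
  Num.sqrt ((a.1 - b.1) ^+ 2 + (a.2 - b.2) ^+ 2).

Definition circ_pt (R : realType) (n : nat) (k : 'I_n) : R * R :=
  (cos (2 * pi * k%:R / n%:R), sin (2 * pi * k%:R / n%:R)).

Definition walk_weight (R : realType) (n : nat) (pt : 'I_n -> R * R)
    (p : 'I_n) (s : seq 'I_n) : R :=
  \sum_(xy <- zip (p :: s) s) edist (pt xy.1) (pt xy.2).

(* Shortest-path distance d_G(p,q) in the graph with edge relation e
   (infimum over walks; +oo if no walk exists). *)
Definition sp_dist (R : realType) (n : nat) (pt : 'I_n -> R * R)
    (e : rel 'I_n) (p q : 'I_n) : \bar R :=
  ereal_inf [set (walk_weight pt p s)%:E |
             s in [set s : seq 'I_n | path e p s && (last p s == q)]].

Definition dilation (R : realType) (n : nat) (pt : 'I_n -> R * R)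
    (e : rel 'I_n) : \bar R :=
  ereal_sup [set (sp_dist pt e pq.1 pq.2 * ((edist (pt pq.1) (pt pq.2))^-1)%:E)%E |
             pq in [set pq : 'I_n * 'I_n | pq.1 != pq.2]].

(* Main.v *)
Require Import Defs.
From HB Require Import structures.
From mathcomp Require Import all_boot all_order all_algebra.
From mathcomp Require Import all_classical all_reals all_analysis.
From mathcomp Require Import ring lra zify.
Import Order.TTheory GRing.Theory Num.Theory.
Local Open Scope ring_scope.
Section S.
Variable R : realType.
Lemma edist_tri (a b c : R * R) : @Defs.edist R a c <= @Defs.edist R a b + @Defs.edist R b c.
Proof.
rewrite /Defs.edist.
set u1 := a.1 - b.1; set u2 := a.2 - b.2; set v1 := b.1 - c.1; set v2 := b.2 - c.2.
have -> : a.1 - c.1 = u1 + v1 by rewrite /u1 /v1; ring.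
have -> : a.2 - c.2 = u2 + v2 by rewrite /u2 /v2; ring.
have hU : 0 <= u1 ^+ 2 + u2 ^+ 2 by rewrite addr_ge0 ?sqr_ge0.
have hV : 0 <= v1 ^+ 2 + v2 ^+ 2 by rewrite addr_ge0 ?sqr_ge0.
have sU := sqrtr_ge0 (u1 ^+ 2 + u2 ^+ 2).
have sV := sqrtr_ge0 (v1 ^+ 2 + v2 ^+ 2).
have eU := sqr_sqrtr hU.
have eV := sqr_sqrtr hV.
set U := Num.sqrt _ in sU eU *; set V := Num.sqrt _ in sV eV *.
have yge : 0 <= U * V by rewrite mulr_ge0.
have cs : (u1 * v1 + u2 * v2) ^+ 2 <= (U * V) ^+ 2.
  rewrite exprMn eU eV.
  have : 0 <= (u1 * v2 - u2 * v1) ^+ 2 by rewrite sqr_ge0.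
  move=> h; rewrite -subr_ge0.
  have -> : (u1 ^+ 2 + u2 ^+ 2) * (v1 ^+ 2 + v2 ^+ 2) - (u1 * v1 + u2 * v2) ^+ 2
     = (u1 * v2 - u2 * v1) ^+ 2 by ring.
  exact: h.
have xy : u1 * v1 + u2 * v2 <= U * V by nra.
rewrite -(ger0_norm (addr_ge0 sU sV)) -sqrtr_sqr ler_sqrt ?sqr_ge0 //.
nra.
Qed.
Lemma edist_circ (n : nat) (a b : 'I_n) :
  Defs.edist (@circ_pt R n a) (@circ_pt R n b) =
  Num.sqrt (2 - 2 * cos (2 * pi * (a : nat)%:R / n%:R - 2 * pi * (b : nat)%:R / n%:R)).
Proof.
rewrite /Defs.edist /circ_pt /= cosB.
set x := 2 * pi * _ / _; set y := 2 * pi * _ / _.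
have h1 := cos2Dsin2 x; have h2 := cos2Dsin2 y.
congr Num.sqrt.
have -> : (cos x - cos y) ^+ 2 + (sin x - sin y) ^+ 2 =
  (cos x ^+ 2 + sin x ^+ 2) + (cos y ^+ 2 + sin y ^+ 2) - 2 * (cos x * cos y + sin x * sin y) by ring.
rewrite h1 h2; ring.
Qed.

Lemma cos_le (x y : R) : 0 <= x -> x <= y -> y <= pi -> cos y <= cos x.
Proof.
move=> h0 hxy hy.
rewrite le_eqVlt in hxy; case/orP: hxy => [/eqP -> //|hxy].
apply/ltW; rewrite ltr_cos // in_itv /=; apply/andP; split => //; lra.
Qed.

Lemma cos_lt1 (x : R) : 0 < x -> x <= pi -> cos x < 1.
Proof.
move=> h0 h1; rewrite -cos0 ltr_cos // in_itv /=; apply/andP; split => //; try lra.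

Qed.

Lemma cos_2pi_sub (x : R) : cos (pi *+ 2 - x) = cos x.
Proof. by rewrite addrC cosD2pi cosN. Qed.

Lemma cos_step (n k : nat) : (1 <= k)%N -> (k.*2 <= n)%N ->
  @cos R (2 * pi * k%:R / n%:R) <= @cos R (2 * pi / n%:R).
Proof.
move=> hk hkn.
have n0 : (0 < n)%N by case: k hk hkn => // k _; rewrite doubleS; case: n.
have nR : (0:R) < n%:R by rewrite ltr0n.
have pi0 := pi_gt0 R.
apply: cos_le.
- rewrite divr_ge0 // ?mulr_ge0 //; lra.
- rewrite ler_pM2r ?invr_gt0 // ler_peMr ?mulr_ge0 //; first lra.
  by rewrite ler1n.
- rewrite ler_pdivrMr //.
  have hkR : 2 * k%:R <= n%:R :> R by rewrite -[2]/(2%:R) -natrM mulnC muln2 ler_nat.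
  nra.
Qed.

Lemma cos_chord (n m : nat) : (1 <= m)%N -> (m < n)%N ->
  @cos R (2 * pi * m%:R / n%:R) <= @cos R (2 * pi / n%:R).
Proof.
move=> hm hmn.
case: (leqP m.*2 n) => h; first exact: cos_step.
have nR : (n%:R : R) != 0 by rewrite pnatr_eq0; case: n hmn {h}.
have -> : 2 * pi * m%:R / n%:R = pi *+ 2 - 2 * pi * (n - m)%:R / n%:R :> R.
  by rewrite natrB ?(ltnW hmn) //; field.
rewrite cos_2pi_sub; apply: cos_step; first by rewrite subn_gt0.
rewrite -!muln2 in h *; lia.
Qed.

Lemma cos_diff (n : nat) (a b : 'I_n) : a != b ->
  @cos R (2 * pi * (a : nat)%:R / n%:R - 2 * pi * (b : nat)%:R / n%:R) <= @cos R (2 * pi / n%:R).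
Proof.
wlog hab : a b / (b < a)%N.
  move=> H ne; case: (ltngtP b a) => h; first exact: H.
  - rewrite -cosN opprB; apply: H => //; by rewrite eq_sym.
  - by move/eqP: ne; case; apply: val_inj.
move=> _.
have -> : 2 * pi * (a : nat)%:R / n%:R - 2 * pi * (b : nat)%:R / n%:R
   = 2 * pi * (a - b)%:R / n%:R :> R by rewrite natrB ?(ltnW hab) //; ring.
apply: cos_chord; first by rewrite subn_gt0.
have := ltn_ord a; lia.
Qed.
Lemma edist_self (a : R * R) : Defs.edist a a = 0.
Proof. by rewrite /Defs.edist !subrr expr0n /= addr0 sqrtr0. Qed.

Lemma weight_cons (n : nat) (pt : 'I_n -> R * R) p x s :
  walk_weight pt p (x :: s) = Defs.edist (pt p) (pt x) + walk_weight pt x s.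
Proof. by rewrite /walk_weight /= big_cons. Qed.

Lemma weight_ge_dist (n : nat) (pt : 'I_n -> R * R) p s :
  Defs.edist (pt p) (pt (last p s)) <= walk_weight pt p s.
Proof.
elim: s p => [|x s IH] p /=.
  by rewrite edist_self /walk_weight /= big_nil.
rewrite weight_cons; apply: le_trans (edist_tri _ (pt x) _) _.
by rewrite lerD2l.
Qed.
End S.

Theorem lemma26 (R : realType) (n : nat) (e : rel 'I_n) :
  (3 <= n)%N ->
  symmetric e ->
  (dilation (@circ_pt R n) e < 2%:E)%E ->
  forall (i j : 'I_n), (j : nat) = (i.+1 %% n)%N -> e i j.
Proof.
move=> n3 esym hdil i j hj.
case E: (e i j) => //; exfalso.
set pt := @circ_pt R n.
set t : R := 2 * pi / n%:R.
set d := Defs.edist (pt i) (pt j).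
have nR : (n%:R : R) != 0 by rewrite pnatr_eq0; lia.
have nR0 : (0 : R) < n%:R by rewrite ltr0n; lia.
have pi0 := pi_gt0 R.
have hd : d = Num.sqrt (2 - 2 * cos t).
  rewrite /d /pt edist_circ; congr (Num.sqrt (2 - 2 * _)).
  case: (ltnP i.+1 n) => hi.
    rewrite modn_small // in hj; rewrite hj -addn1 natrD -cosN; congr cos.
    rewrite /t; ring.
  have hn : n = i.+1 by have := ltn_ord i; lia.
  rewrite -hn modnn in hj; rewrite hj -cos_2pi_sub; congr cos.
  have -> : ((i : nat)%:R : R) = n%:R - 1 by rewrite [in RHS]hn -addn1 natrD addrK.
  rewrite /t; field; exact: nR.
have hij : i != j.
  apply/eqP => hij; rewrite -hij in hj.
  case: (ltnP i.+1 n) => hi.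
    by rewrite modn_small // in hj; lia.
  have hn : n = i.+1 by have := ltn_ord i; lia.
  by rewrite -hn modnn in hj; lia.
have tpos : 0 < t by rewrite /t divr_gt0 // mulr_gt0.
have tpi : t <= pi.
  rewrite /t ler_pdivrMr //.
  have : (3 : R) <= n%:R by rewrite -[3]/(3%:R) ler_nat.
  nra.
have dpos : 0 < d by rewrite hd sqrtr_gt0; have := @cos_lt1 R t tpos tpi; lra.
have hmin : forall a b : 'I_n, a != b -> d <= Defs.edist (pt a) (pt b).
  move=> a b hab; rewrite hd /pt edist_circ ler_sqrt.
    by rewrite lerD2l lerN2 ler_pM2l //; exact: (@cos_diff R _ _ _ hab).
  by rewrite subr_ge0 ler_piMr // cos_le1.
have hwalk : forall s, path e i s -> last i s = j -> 2 * d <= walk_weight pt i s.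
  elim => [|x s IH] /=.
    by move=> _ h; rewrite h eqxx in hij.
  move=> /andP [eix ps] hl; rewrite weight_cons.
  case: (eqVneq x i) => [xi|xni].
    rewrite xi edist_self add0r; apply: IH; by rewrite -?xi.
  have xnj : x != j by apply/eqP => xj; rewrite xj E in eix.
  have := @weight_ge_dist R _ pt x s; rewrite hl => h1.
  have := hmin i x; rewrite eq_sym xni => /(_ isT) h2.
  have := hmin x j xnj => h3.
  lra.
have hsp : ((2 * d)%:E <= sp_dist pt e i j)%E.
  apply: le_ereal_inf_tmp => y [s /andP [ps /eqP hl] <-].
  by rewrite lee_fin; exact: hwalk.
have hsup : (sp_dist pt e i j * (d^-1)%:E <= dilation pt e)%E.
  by apply: ereal_sup_ubound; exists (i, j).
have h2 : (2%:E <= dilation pt e)%E.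
  apply: le_trans hsup.
  have -> : (2%:E = (2 * d)%:E * (d^-1)%:E :> \bar R)%E.
    by rewrite -EFinM -mulrA mulfV ?mulr1 // gt_eqF.
  by apply: lee_wpmul2r => //; rewrite lee_fin invr_ge0 ltW.
by move: hdil; rewrite /pt ltNge h2.
Qed.
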